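(* Let $m\ge1$ be an integer. Then $\big[N,\frac im\log L^m\big]=-i\mathbf1$ on $\ell^2_m\cap\mathrm D(N\log L^m)\cap\mathrm D(\log(L^m)N)$, and this subspace is infinite-dimensional.
   Context: $\ell^2=\ell^2(\mathbb N)$, $\mathbb N=\{0,1,\dots\}$, basis $(\xi_n)$; $N\xi_n=n\xi_n$ (self-adjoint, maximal domain); $L$ left shift ($L\xi_n=\xi_{n-1}$, $L\xi_0=0$). For a linear operator $A$, $\mathrm D(\log A)=\{f\in\bigcap_{k\ge0}\mathrm D(A^k):\lim_K\sum_{k=1}^K\frac1k(\mathbf1-A)^kf\text{ exists}\}$, $\log Af=-\sum_{k\ge1}\frac1k(\mathbf1-A)^kf$. $\ell^2_m=\{\varphi\in\ell^2:\lim_{k\to\infty}(\mathbf1-L^m)^k\varphi=0\}$. Commutators $[A,B]=AB-BA$ on $\mathrm D(AB)\cap\mathrm D(BA)$. *)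

(* Defs.v *)
From Stdlib Require Import Reals.
From Coquelicot Require Import Coquelicot.
Open Scope R_scope.

(* Sequences indexed by N = {0,1,...}; phi n is the coefficient on xi_n. *)
Definition seqC := nat -> C.

Definition l2 (f : seqC) : Prop := ex_series (fun n => (Cmod (f n)) ^ 2).

(* Squared l^2 norm (meaningful for f in l^2). *)
Definition l2norm2 (f : seqC) : R := Series (fun n => (Cmod (f n)) ^ 2).

Definition l2conv (u : nat -> seqC) (g : seqC) : Prop :=
  l2 g /\ (forall K, l2 (u K)) /\
  is_lim_seq (fun K => l2norm2 (fun n => Cminus (u K n) (g n))) 0.

Record op := Op { dom : seqC -> Prop; app : seqC -> seqC }.

Definition idop : op := Op l2 (fun f => f).

Definition ocomp (A B : op) : op :=
  Op (fun f => dom B f /\ dom A (app B f)) (fun f => app A (app B f)).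

Definition osub (A B : op) : op :=
  Op (fun f => dom A f /\ dom B f) (fun f n => Cminus (app A f n) (app B f n)).

Definition oscal (c : C) (A : op) : op :=
  Op (dom A) (fun f n => Cmult c (app A f n)).

Fixpoint opow (A : op) (k : nat) : op :=
  match k with
  | O => idop
  | S k' => ocomp A (opow A k')
  end.

Definition comm (A B : op) : op := osub (ocomp A B) (ocomp B A).

Fixpoint csum (d : nat) (f : nat -> C) : C :=
  match d with
  | O => RtoC 0
  | S d' => Cplus (csum d' f) (f d')
  end.

Definition logpsum (A : op) (f : seqC) (K : nat) : seqC :=
  fun n => csum (S K) (fun k =>
    match k with
    | O => RtoC 0
    | S _ => Cmult (RtoC (/ INR k)) (app (opow (osub idop A) k) f n)
    end).

Definition logdom (A : op) (f : seqC) : Prop :=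
  (forall k, dom (opow A k) f) /\ exists g, l2conv (logpsum A f) g.

(* log A f = - sum_{k>=1} (1/k)(1-A)^k f.  On D(log A) the l^2 limit exists,
   so it coincides with the coordinatewise limit used here. *)
Definition logop (A : op) : op :=
  Op (logdom A)
     (fun f n => Copp (real (Lim_seq (fun K => Re (logpsum A f K n))),
                       real (Lim_seq (fun K => Im (logpsum A f K n))))).

(* Left shift: L xi_n = xi_{n-1}, L xi_0 = 0, i.e. (L f)_n = f_{n+1}. *)
Definition Lop : op := Op l2 (fun f n => f (S n)).

Definition Nop : op :=
  Op (fun f => l2 f /\ l2 (fun n => Cmult (RtoC (INR n)) (f n)))
     (fun f n => Cmult (RtoC (INR n)) (f n)).

Definition l2m (m : nat) (phi : seqC) : Prop :=
  l2 phi /\ l2conv (fun k => app (opow (osub idop (opow Lop m)) k) phi) (fun _ => RtoC 0).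

Definition Sm (m : nat) (phi : seqC) : Prop :=
  l2m m phi /\ dom (ocomp Nop (logop (opow Lop m))) phi
            /\ dom (ocomp (logop (opow Lop m)) Nop) phi.

Definition infinite_dimensional (S : seqC -> Prop) : Prop :=
  forall d : nat, exists v : nat -> seqC,
    (forall j, (j < d)%nat -> S (v j)) /\
    (forall c : nat -> C,
        (forall n, csum d (fun j => Cmult (c j) (v j n)) = RtoC 0) ->
        forall j, (j < d)%nat -> c j = RtoC 0).

(* Main.v *)
Require Import Defs.
From Stdlib Require Import Reals Lra Lia Psatz FunctionalExtensionality.
From Coquelicot Require Import Coquelicot.
Open Scope R_scope.

Lemma ex_series_scalR (c : R) (a : nat -> R) : ex_series a -> ex_series (fun n => c * a n).
Proof. intros H. exact (@ex_series_scal_l R_AbsRing R_NormedModule c a H). Qed.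

Lemma ex_series_plusR (a b : nat -> R) : ex_series a -> ex_series b -> ex_series (fun n => a n + b n).
Proof. intros H1 H2. exact (@ex_series_plus R_AbsRing R_NormedModule a b H1 H2). Qed.

Lemma ex_series_extR (a b : nat -> R) : (forall n, a n = b n) -> ex_series a -> ex_series b.
Proof. intros H1 H2. exact (@ex_series_ext R_AbsRing R_NormedModule a b H1 H2). Qed.

Lemma Series_zero : Series (fun _ => 0) = 0.
Proof.
  rewrite (Series_ext _ (fun n => 0 * (fun _ => 0) n)) by (intros; ring).
  rewrite Series_scal_l; ring.
Qed.

Lemma term_le_Series (a : nat -> R) k :
  ex_series a -> (forall n, 0 <= a n) -> a k <= Series a.
Proof.
  intros Ha Hp.
  set (b := fun n => if Nat.eq_dec n k then a k else 0).
  assert (Hb : Series b = a k).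
  { rewrite (Series_incr_n_aux b k).
    2:{ intros j Hj; unfold b; destruct (Nat.eq_dec j k); [lia|reflexivity]. }
    rewrite Series_incr_1.
    - rewrite (Series_ext _ (fun _ => 0)).
      + rewrite Series_zero. unfold b. rewrite Nat.add_0_r.
        destruct (Nat.eq_dec k k); [ring|congruence].
      + intros j. unfold b. destruct (Nat.eq_dec (k + S j) k); [lia|reflexivity].
    - apply (proj1 (ex_series_incr_n b k)).
      apply (proj2 (ex_series_incr_n b (S k))).
      apply ex_series_extR with (fun _ => 0).
      + intros j. unfold b. destruct (Nat.eq_dec (S k + j) k); [lia|reflexivity].
      + apply ex_series_extR with (fun n => 0 * a n).
        * intros n0; simpl; ring.
        * apply ex_series_scalR; exact Ha. }
  rewrite <- Hb. apply Series_le; [|exact Ha].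
  intros n; unfold b; destruct (Nat.eq_dec n k); subst; split; try apply Hp; lra.
Qed.

Lemma sqr_le_2 (a b : R) : (a + b) ^ 2 <= 2 * a ^ 2 + 2 * b ^ 2.
Proof. pose proof (pow2_ge_0 (a - b)). simpl in *. nra. Qed.

Lemma Cmod_plus_sq (x y : C) : Cmod (Cplus x y) ^ 2 <= 2 * Cmod x ^ 2 + 2 * Cmod y ^ 2.
Proof.
  pose proof (Cmod_triangle x y). pose proof (Cmod_ge_0 (Cplus x y)).
  apply Rle_trans with ((Cmod x + Cmod y) ^ 2); [apply pow_incr; split; auto | apply sqr_le_2].
Qed.

Lemma Cmod_minus_sq (x y : C) : Cmod (Cminus x y) ^ 2 <= 2 * Cmod x ^ 2 + 2 * Cmod y ^ 2.
Proof.
  unfold Cminus. pose proof (Cmod_plus_sq x (Copp y)). rewrite Cmod_opp in H. exact H.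
Qed.

Lemma ex_series_R_le (a b : nat -> R) :
  (forall n, 0 <= a n <= b n) -> ex_series b -> ex_series a.
Proof.
  intros H Hb. apply (ex_series_le a b); [|exact Hb].
  intros n. specialize (H n). unfold norm; simpl. unfold abs; simpl.
  rewrite Rabs_pos_eq; lra.
Qed.

Lemma l2_ext f g : (forall n, f n = g n) -> l2 f -> l2 g.
Proof. intros H Hf. replace g with f; [exact Hf|]. apply functional_extensionality; exact H. Qed.

Lemma l2_scal (c : C) f : l2 f -> l2 (fun n => Cmult c (f n)).
Proof.
  unfold l2; intros Hf.
  apply ex_series_extR with (fun n => (Cmod c ^ 2) * (Cmod (f n) ^ 2)).
  - intros n. rewrite Cmod_mult. ring.
  - apply ex_series_scalR; exact Hf.
Qed.

Lemma l2_plus f g : l2 f -> l2 g -> l2 (fun n => Cplus (f n) (g n)).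
Proof.
  unfold l2; intros Hf Hg.
  apply ex_series_R_le with (fun n => 2 * (Cmod (f n) ^ 2) + 2 * (Cmod (g n) ^ 2)).
  - intros n. split; [apply pow2_ge_0|].
    apply Cmod_plus_sq.
  - apply ex_series_plusR; apply ex_series_scalR; assumption.
Qed.

Lemma l2_minus f g : l2 f -> l2 g -> l2 (fun n => Cminus (f n) (g n)).
Proof.
  unfold l2; intros Hf Hg.
  apply ex_series_R_le with (fun n => 2 * (Cmod (f n) ^ 2) + 2 * (Cmod (g n) ^ 2)).
  - intros n. split; [apply pow2_ge_0|].
    apply Cmod_minus_sq.
  - apply ex_series_plusR; apply ex_series_scalR; assumption.
Qed.

Lemma l2_zero : l2 (fun _ => RtoC 0).
Proof.
  unfold l2. apply ex_series_extR with (fun n => 0 * (0 ^ n)).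
  - intros; rewrite Cmod_0; ring.
  - apply ex_series_scalR, ex_series_geom. rewrite Rabs_R0; lra.
Qed.

Lemma sq_lt_abs (x e : R) : 0 < e -> x ^ 2 < e * e -> Rabs x < e.
Proof. intros He H. apply Rabs_def1; simpl in H; nra. Qed.

Lemma l2conv_coord u g : l2conv u g -> forall n,
  is_lim_seq (fun K => Re (u K n)) (Re (g n)) /\ is_lim_seq (fun K => Im (u K n)) (Im (g n)).
Proof.
  intros [Hg [Hu Hlim]] n. apply is_lim_seq_spec in Hlim.
  assert (Key : forall eps : posreal, eventually (fun K =>
     Cmod (Cminus (u K n) (g n)) ^ 2 < eps * eps)).
  { intros eps.
    assert (Hp : 0 < eps * eps) by (apply Rmult_lt_0_compat; apply cond_pos).
    destruct (Hlim (mkposreal _ Hp)) as [N HN]. exists N. intros K HK.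
    specialize (HN K HK). simpl in HN.
    assert (Hs : ex_series (fun j => Cmod (Cminus (u K j) (g j)) ^ 2))
      by (apply l2_minus; auto).
    pose proof (term_le_Series _ n Hs (fun j => pow2_ge_0 _)).
    unfold l2norm2 in HN. rewrite Rminus_0_r in HN.
    pose proof (Rle_abs (Series (fun j => Cmod (Cminus (u K j) (g j)) ^ 2))). lra. }
  split; apply is_lim_seq_spec; intros eps; destruct (Key eps) as [N HN]; exists N;
    intros K HK; specialize (HN K HK); rewrite Cmod2_alt in HN;
    apply sq_lt_abs; try apply cond_pos;
    destruct (u K n) as [a b]; destruct (g n) as [c d]; simpl in *;
    pose proof (Rle_0_sqr (a + - c)); pose proof (Rle_0_sqr (b + - d)); unfold Rsqr, Rminus in *; nra.
Qed.

Lemma logop_app A f g : l2conv (logpsum A f) g -> forall n, app (logop A) f n = Copp (g n).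
Proof.
  intros H n. destruct (l2conv_coord _ _ H n) as [H1 H2].
  change (app (logop A) f n) with (Copp (real (Lim_seq (fun K => Re (logpsum A f K n))), real (Lim_seq (fun K => Im (logpsum A f K n))))).
  rewrite (is_lim_seq_unique _ _ H1), (is_lim_seq_unique _ _ H2). simpl.
  destruct (g n); reflexivity.
Qed.

Lemma Lpow_app j f n : app (opow Lop j) f n = f (n + j)%nat.
Proof.
  revert n; induction j; intros n; simpl.
  - f_equal; lia.
  - rewrite IHj. f_equal; lia.
Qed.

Definition Tm (m : nat) : op := osub idop (opow Lop m).

Lemma Tm_app m f n : app (Tm m) f n = Cminus (f n) (f (n + m)%nat).
Proof. unfold Tm. simpl. rewrite Lpow_app. reflexivity. Qed.

Lemma Tpow_S m k f n : app (opow (Tm m) (S k)) f n =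
  Cminus (app (opow (Tm m) k) f n) (app (opow (Tm m) k) f (n + m)%nat).
Proof. change (app (opow (Tm m) (S k)) f n) with (app (Tm m) (app (opow (Tm m) k) f) n).
  apply Tm_app. Qed.

Lemma comm_T m k f n :
  app (opow (Tm m) (S k)) (app Nop f) n =
  Cminus (Cmult (RtoC (INR n)) (app (opow (Tm m) (S k)) f n))
         (Cmult (RtoC (INR (S k) * INR m))
            (Cminus (app (opow (Tm m) k) f n) (app (opow (Tm m) (S k)) f n))).
Proof.
  revert n; induction k; intros n.
  - rewrite !Tpow_S. simpl. rewrite plus_INR. rewrite !RtoC_plus, !RtoC_mult. ring.
  - rewrite (Tpow_S m (S k) (app Nop f) n). rewrite !IHk.
    rewrite (Tpow_S m (S k) f n). rewrite (Tpow_S m k f n).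
    rewrite (Tpow_S m k f (n + m)).
    rewrite plus_INR, !S_INR. rewrite !RtoC_plus, !RtoC_mult, !RtoC_plus. ring.
Qed.

Lemma RtoC_nz (x : R) : x <> 0 -> RtoC x <> RtoC 0.
Proof. intros H E. apply H. injection E. auto. Qed.

Lemma logpsum_S A f K n : logpsum A f (S K) n =
  Cplus (logpsum A f K n) (Cmult (RtoC (/ INR (S K))) (app (opow (osub idop A) (S K)) f n)).
Proof. reflexivity. Qed.

Lemma logpsum_0 A f n : logpsum A f 0 n = RtoC 0.
Proof. unfold logpsum. simpl. apply injective_projections; simpl; ring. Qed.

Lemma psum_comm m f K n :
  Cminus (Cmult (RtoC (INR n)) (logpsum (opow Lop m) f K n)) (logpsum (opow Lop m) (app Nop f) K n)
  = Cmult (RtoC (INR m)) (Cminus (f n) (app (opow (Tm m) K) f n)).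
Proof.
  induction K.
  - rewrite !logpsum_0. simpl. ring.
  - rewrite !logpsum_S.
    change (osub idop (opow Lop m)) with (Tm m).
    rewrite comm_T.
    assert (Hk : INR (S K) <> 0) by (apply not_0_INR; lia).
    rewrite (RtoC_inv _ Hk), RtoC_mult.
    pose proof (RtoC_nz _ Hk).
    revert IHK. generalize (logpsum (opow Lop m) f K n) (logpsum (opow Lop m) (app Nop f) K n).
    intros s1 s2 IH.
    transitivity (Cplus (Cminus (Cmult (RtoC (INR n)) s1) s2) (Cmult (RtoC (INR m)) (Cminus (app (opow (Tm m) K) f n) (app (opow (Tm m) (S K)) f n)))).
    + field. exact H.
    + rewrite IH. ring.
Qed.

Lemma Re_lin r z w : Re (Cminus (Cmult (RtoC r) z) w) = r * Re z - Re w.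
Proof. destruct z, w; simpl; ring. Qed.
Lemma Im_lin r z w : Im (Cminus (Cmult (RtoC r) z) w) = r * Im z - Im w.
Proof. destruct z, w; simpl; ring. Qed.
Lemma Re_lin2 r a b : Re (Cmult (RtoC r) (Cminus a b)) = r * (Re a - Re b).
Proof. destruct a, b; simpl; ring. Qed.
Lemma Im_lin2 r a b : Im (Cmult (RtoC r) (Cminus a b)) = r * (Im a - Im b).
Proof. destruct a, b; simpl; ring. Qed.

Lemma key_eq m phi g1 g2 :
  l2conv (fun k => app (opow (Tm m) k) phi) (fun _ => RtoC 0) ->
  l2conv (logpsum (opow Lop m) phi) g1 ->
  l2conv (logpsum (opow Lop m) (app Nop phi)) g2 ->
  forall n, Cminus (Cmult (RtoC (INR n)) (g1 n)) (g2 n) = Cmult (RtoC (INR m)) (phi n).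
Proof.
  intros HT H1 H2 n.
  destruct (l2conv_coord _ _ HT n) as [T1 T2].
  destruct (l2conv_coord _ _ H1 n) as [A1 A2].
  destruct (l2conv_coord _ _ H2 n) as [B1 B2].
  pose proof (psum_comm m phi) as PC.
  apply injective_projections.
  - change (fst ?z) with (Re z). rewrite Re_lin.
    assert (L1 : is_lim_seq (fun K => INR n * Re (logpsum (opow Lop m) phi K n)
                      - Re (logpsum (opow Lop m) (app Nop phi) K n)) (INR n * Re (g1 n) - Re (g2 n))).
    { apply is_lim_seq_minus'; [|exact B1].
      apply (is_lim_seq_scal_l _ (INR n) (Re (g1 n))); exact A1. }
    assert (L2 : is_lim_seq (fun K => INR n * Re (logpsum (opow Lop m) phi K n)
                      - Re (logpsum (opow Lop m) (app Nop phi) K n)) (INR m * (Re (phi n) - Re (RtoC 0)))).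
    { apply is_lim_seq_ext with (fun K => INR m * (Re (phi n) - Re (app (opow (Tm m) K) phi n))).
      - intros K. rewrite <- Re_lin, <- Re_lin2. rewrite PC. reflexivity.
      - apply (is_lim_seq_scal_l _ (INR m) (Re (phi n) - Re (RtoC 0))).
        apply is_lim_seq_minus'; [apply is_lim_seq_const|exact T1]. }
    apply is_lim_seq_unique in L1. apply is_lim_seq_unique in L2.
    rewrite L1 in L2. injection L2. intros ->. destruct (phi n); simpl; ring.
  - change (snd ?z) with (Im z). rewrite Im_lin.
    assert (L1 : is_lim_seq (fun K => INR n * Im (logpsum (opow Lop m) phi K n)
                      - Im (logpsum (opow Lop m) (app Nop phi) K n)) (INR n * Im (g1 n) - Im (g2 n))).
    { apply is_lim_seq_minus'; [|exact B2].
      apply (is_lim_seq_scal_l _ (INR n) (Im (g1 n))); exact A2. }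
    assert (L2 : is_lim_seq (fun K => INR n * Im (logpsum (opow Lop m) phi K n)
                      - Im (logpsum (opow Lop m) (app Nop phi) K n)) (INR m * (Im (phi n) - Im (RtoC 0)))).
    { apply is_lim_seq_ext with (fun K => INR m * (Im (phi n) - Im (app (opow (Tm m) K) phi n))).
      - intros K. rewrite <- Im_lin, <- Im_lin2. rewrite PC. reflexivity.
      - apply (is_lim_seq_scal_l _ (INR m) (Im (phi n) - Im (RtoC 0))).
        apply is_lim_seq_minus'; [apply is_lim_seq_const|exact T2]. }
    apply is_lim_seq_unique in L1. apply is_lim_seq_unique in L2.
    rewrite L1 in L2. injection L2. intros ->. destruct (phi n); simpl; ring.
Qed.

Lemma part1 (m : nat) (hm : (1 <= m)%nat) :
  (forall phi : seqC, Sm m phi ->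
     dom (comm Nop (oscal (Cdiv Ci (RtoC (INR m))) (logop (opow Lop m)))) phi /\
     forall n : nat,
       app (comm Nop (oscal (Cdiv Ci (RtoC (INR m))) (logop (opow Lop m)))) phi n
       = Cmult (Copp Ci) (phi n)).
Proof.
  intros phi [[Hl2 HT] [[Hld HNd] [HNphi Hld2]]].
  set (c := Cdiv Ci (RtoC (INR m))).
  split.
  - split; split.
    + exact Hld.
    + destruct HNd as [Ha Hb]. split.
      * apply l2_scal. exact Ha.
      * apply l2_ext with (fun n => Cmult c (Cmult (RtoC (INR n)) (app (logop (opow Lop m)) phi n))).
        -- intros n. simpl. ring.
        -- apply l2_scal. exact Hb.
    + exact HNphi.
    + exact Hld2.
  - intros n.
    destruct Hld as [_ [g1 Hg1]]. destruct Hld2 as [_ [g2 Hg2]].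
    pose proof (key_eq m phi g1 g2 HT Hg1 Hg2 n) as E.
    change (app (comm Nop (oscal c (logop (opow Lop m)))) phi n) with
      (Cminus (Cmult (RtoC (INR n)) (Cmult c (app (logop (opow Lop m)) phi n)))
              (Cmult c (app (logop (opow Lop m)) (app Nop phi) n))).
    rewrite (logop_app _ _ _ Hg1), (logop_app _ _ _ Hg2).
    assert (Hm : RtoC (INR m) <> RtoC 0) by (apply RtoC_nz, not_0_INR; lia).
    assert (E2 : g2 n = Cminus (Cmult (RtoC (INR n)) (g1 n)) (Cmult (RtoC (INR m)) (phi n)))
      by (rewrite <- E; ring).
    rewrite E2. unfold c. field. exact Hm.
Qed.

Lemma Cmod_RtoC_sq x : Cmod (RtoC x) ^ 2 = x ^ 2.
Proof. rewrite Cmod_R, pow2_abs. reflexivity. Qed.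

Lemma l2_pow q : 0 <= q < 1 -> l2 (fun n => RtoC (q ^ n)).
Proof.
  intros Hq. unfold l2.
  apply ex_series_extR with (fun n => (q ^ 2) ^ n).
  - intros n. rewrite Cmod_RtoC_sq, <- !pow_mult. f_equal. lia.
  - apply ex_series_geom. rewrite Rabs_pos_eq by (apply pow2_ge_0). simpl. nra.
Qed.

Lemma INR_le_2pow n : INR n <= 2 ^ n.
Proof.
  induction n. simpl; lra.
  rewrite S_INR. simpl. pose proof (pow_R1_Rle 2 n ltac:(lra)). lra.
Qed.

Lemma l2_Npow q : 0 <= q <= /8 -> l2 (fun n => Cmult (RtoC (INR n)) (RtoC (q ^ n))).
Proof.
  intros Hq. unfold l2.
  apply ex_series_R_le with (fun n => (4 * q ^ 2) ^ n).
  - intros n. split; [apply pow2_ge_0|].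
    rewrite <- RtoC_mult, Cmod_RtoC_sq.
    rewrite Rpow_mult_distr, Rpow_mult_distr.
    replace (4 ^ n) with ((2 ^ n) ^ 2) by (rewrite <- !pow_mult; replace 4 with (2^2) by (simpl; ring); rewrite <- pow_mult; f_equal; lia).
    replace ((q ^ 2) ^ n) with ((q ^ n) ^ 2) by (rewrite <- !pow_mult; f_equal; lia).
    apply Rmult_le_compat_r; [apply pow2_ge_0|].
    apply pow_incr. split; [apply pos_INR|apply INR_le_2pow].
  - apply ex_series_geom. rewrite Rabs_pos_eq by (pose proof (pow2_ge_0 q); lra). simpl. nra.
Qed.

Definition pres (A : op) := forall f, l2 f -> dom A f /\ l2 (app A f).

Lemma pres_Lop : pres Lop.
Proof. intros f Hf. split; [exact Hf|]. unfold l2 in *. simpl. apply (proj1 (ex_series_incr_1 _)) in Hf. exact Hf. Qed.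

Lemma pres_id : pres idop.
Proof. intros f Hf; split; exact Hf. Qed.

Lemma pres_pow A k : pres A -> pres (opow A k).
Proof.
  intros HA. induction k; intros f Hf.
  - apply pres_id; exact Hf.
  - destruct (IHk f Hf) as [H1 H2]. destruct (HA _ H2) as [H3 H4].
    split; [split; assumption| exact H4].
Qed.

Lemma pres_sub A B : pres A -> pres B -> pres (osub A B).
Proof.
  intros HA HB f Hf. destruct (HA f Hf), (HB f Hf).
  split; [split; assumption|]. apply l2_minus; assumption.
Qed.

Lemma pres_T m k : pres (opow (Tm m) k).
Proof. apply pres_pow, pres_sub; [apply pres_id| apply pres_pow, pres_Lop]. Qed.

Lemma pres_A m k : pres (opow (opow Lop m) k).
Proof. apply pres_pow, pres_pow, pres_Lop. Qed.

Lemma T_eigen m c f : (forall n, f (n + m)%nat = Cmult (RtoC c) (f n)) ->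
  forall k n, app (opow (Tm m) k) f n = Cmult (RtoC ((1 - c) ^ k)) (f n).
Proof.
  intros Hf k. induction k; intros n.
  - simpl. apply injective_projections; simpl; destruct (f n); simpl; ring.
  - rewrite Tpow_S, !IHk, Hf.
    replace (RtoC ((1 - c) ^ S k)) with (Cmult (RtoC ((1 - c) ^ k)) (Cminus (RtoC 1) (RtoC c)))
      by (rewrite <- RtoC_minus, <- RtoC_mult; f_equal; simpl; ring).
    ring.
Qed.

Lemma l2norm2_ge0 f : 0 <= l2norm2 f.
Proof.
  unfold l2norm2. unfold Series.
  assert (H : forall K, 0 <= sum_n (fun n => Cmod (f n) ^ 2) K).
  { induction K. rewrite sum_O. apply pow2_ge_0.
    rewrite sum_Sn. apply Rplus_le_le_0_compat; [exact IHK| apply pow2_ge_0]. }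
  pose proof (Lim_seq_le_loc (fun _ => 0) (sum_n (fun n => Cmod (f n) ^ 2))) as HL.
  rewrite Lim_seq_const in HL.
  assert (HL' : Rbar_le 0 (Lim_seq (sum_n (fun n : nat => Cmod (f n) ^ 2)))).
  { apply HL. exists 0%nat. intros; apply H. }
  destruct (Lim_seq (sum_n (fun n => Cmod (f n) ^ 2))); simpl in *; lra.
Qed.

Lemma l2conv_two (f h : seqC) (a b : nat -> R) (al bl : R) u g :
  l2 f -> l2 h -> is_lim_seq a al -> is_lim_seq b bl ->
  (forall K n, u K n = Cplus (Cmult (RtoC (a K)) (f n)) (Cmult (RtoC (b K)) (h n))) ->
  (forall n, g n = Cplus (Cmult (RtoC al) (f n)) (Cmult (RtoC bl) (h n))) ->
  l2conv u g.
Proof.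
  intros Hf Hh Ha Hb Hu Hg.
  split; [|split].
  - apply l2_ext with (fun n => Cplus (Cmult (RtoC al) (f n)) (Cmult (RtoC bl) (h n))).
    + intros; symmetry; apply Hg.
    + apply l2_plus; apply l2_scal; assumption.
  - intros K. apply l2_ext with (fun n => Cplus (Cmult (RtoC (a K)) (f n)) (Cmult (RtoC (b K)) (h n))).
    + intros; symmetry; apply Hu.
    + apply l2_plus; apply l2_scal; assumption.
  - set (S1 := l2norm2 f). set (S2 := l2norm2 h).
    apply is_lim_seq_le_le with (fun _ => 0)
      (fun K => 2 * ((a K - al) * (a K - al)) * S1 + 2 * ((b K - bl) * (b K - bl)) * S2).
    + intros K. split; [apply l2norm2_ge0|].
      unfold S1, S2, l2norm2.
      rewrite <- !Series_scal_l, <- Series_plus.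
      2,3: apply ex_series_scalR; assumption.
      apply Series_le.
      2: apply ex_series_plusR; apply ex_series_scalR; assumption.
      intros n. split; [apply pow2_ge_0|].
      rewrite Hu, Hg.
      replace (Cminus (Cplus (Cmult (RtoC (a K)) (f n)) (Cmult (RtoC (b K)) (h n)))
                      (Cplus (Cmult (RtoC al) (f n)) (Cmult (RtoC bl) (h n))))
        with (Cplus (Cmult (RtoC (a K - al)) (f n)) (Cmult (RtoC (b K - bl)) (h n)))
        by (rewrite !RtoC_minus; ring).
      eapply Rle_trans; [apply Cmod_plus_sq|].
      rewrite !Cmod_mult, !Cmod_R.
      rewrite !Rpow_mult_distr, !pow2_abs. simpl. lra.
    + apply is_lim_seq_const.
    + assert (Ha0 : is_lim_seq (fun K => a K - al) 0).
      { replace 0 with (al - al) by ring. apply is_lim_seq_minus'; [exact Ha|apply is_lim_seq_const]. }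
      assert (Hb0 : is_lim_seq (fun K => b K - bl) 0).
      { replace 0 with (bl - bl) by ring. apply is_lim_seq_minus'; [exact Hb|apply is_lim_seq_const]. }
      replace (Finite 0) with (Finite (2 * (0 * 0) * S1 + 2 * (0 * 0) * S2)) by (f_equal; ring).
      apply is_lim_seq_plus'; apply is_lim_seq_mult'; try apply is_lim_seq_const;
        apply is_lim_seq_mult'; try apply is_lim_seq_const; apply is_lim_seq_mult'; assumption.
Qed.

Definition vq (q : R) : seqC := fun n => RtoC (q ^ n).
Definition Fq (mu : R) (k : nat) : R := match k with O => 0 | S j => mu ^ (S j) / INR (S j) end.
Definition Gq (m : nat) (c mu : R) (k : nat) : R := match k with O => 0 | S j => - (INR m * c) * mu ^ j end.

Lemma pow_le1 q n : 0 <= q <= 1 -> 0 <= q ^ n <= 1.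
Proof. intros H. split. apply pow_le; lra. rewrite <- (pow1 n). apply pow_incr; lra. Qed.

Lemma c_bounds m q : (1 <= m)%nat -> 0 < q <= /8 -> 0 < q ^ m < 1.
Proof.
  intros hm hq. split. apply pow_lt; lra.
  destruct m as [|m']; [lia|]. simpl.
  pose proof (pow_le1 q m' ltac:(lra)). nra.
Qed.

Lemma v_shift m q n : vq q (n + m)%nat = Cmult (RtoC (q ^ m)) (vq q n).
Proof. unfold vq. rewrite pow_add, RtoC_mult. ring. Qed.

Lemma T_v m q k n : app (opow (Tm m) k) (vq q) n = Cmult (RtoC ((1 - q ^ m) ^ k)) (vq q n).
Proof. apply T_eigen. intros; apply v_shift. Qed.

Lemma logpsum_v m q K n :
  logpsum (opow Lop m) (vq q) K n =
  Cplus (Cmult (RtoC (sum_n (Fq (1 - q ^ m)) K)) (vq q n)) (Cmult (RtoC 0) (vq q n)).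
Proof.
  induction K.
  - rewrite logpsum_0, sum_O. simpl. ring.
  - rewrite logpsum_S. change (osub idop (opow Lop m)) with (Tm m).
    rewrite IHK, T_v, sum_Sn.
    change (plus (sum_n (Fq (1 - q ^ m)) K) (Fq (1 - q ^ m) (S K)))
      with (sum_n (Fq (1 - q ^ m)) K + Fq (1 - q ^ m) (S K)).
    unfold Fq.
    set (r := INR (S K)). set (mu := 1 - q ^ m). set (s := sum_n (Fq mu) K).
    assert (Hr : r <> 0) by (apply not_0_INR; lia).
    destruct (vq q n) as [w1 w2].
    apply injective_projections; simpl; field; exact Hr.
Qed.

Lemma logpsum_Nv m q K n :
  logpsum (opow Lop m) (app Nop (vq q)) K n =
  Cplus (Cmult (RtoC (sum_n (Fq (1 - q ^ m)) K)) (app Nop (vq q) n))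
        (Cmult (RtoC (sum_n (Gq m (q ^ m) (1 - q ^ m)) K)) (vq q n)).
Proof.
  induction K.
  - rewrite logpsum_0, !sum_O. simpl. ring.
  - rewrite logpsum_S. change (osub idop (opow Lop m)) with (Tm m).
    rewrite IHK, comm_T, !T_v, !sum_Sn.
    change (plus (sum_n (Fq (1 - q ^ m)) K) (Fq (1 - q ^ m) (S K)))
      with (sum_n (Fq (1 - q ^ m)) K + Fq (1 - q ^ m) (S K)).
    change (plus (sum_n (Gq m (q ^ m) (1 - q ^ m)) K) (Gq m (q ^ m) (1 - q ^ m) (S K)))
      with (sum_n (Gq m (q ^ m) (1 - q ^ m)) K + Gq m (q ^ m) (1 - q ^ m) (S K)).
    unfold Fq, Gq. change (app Nop (vq q) n) with (Cmult (RtoC (INR n)) (vq q n)).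
    set (r := INR (S K)). set (c := q ^ m). set (s := sum_n (Fq (1 - c)) K).
    set (s2 := sum_n (Gq m c (1 - c)) K). set (rn := INR n). set (rm := INR m).
    set (p := (1 - c) ^ K).
    assert (Hr : r <> 0) by (apply not_0_INR; lia).
    replace ((1 - c) ^ S K) with ((1 - c) * p) by (unfold p; simpl; ring).
    destruct (vq q n) as [w1 w2].
    apply injective_projections; simpl; field; exact Hr.
Qed.

Lemma lim_sum (a : nat -> R) : ex_series a -> is_lim_seq (sum_n a) (Series a).
Proof. intros H. apply Series_correct in H. exact H. Qed.

Lemma ex_Fq mu : 0 <= mu < 1 -> ex_series (Fq mu).
Proof.
  intros Hmu. apply ex_series_R_le with (fun k => mu ^ k).
  - intros [|j].
    + simpl; lra.
    + change (Fq mu (S j)) with (mu ^ S j / INR (S j)).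
      assert (Hr : 1 <= INR (S j)) by (apply (le_INR 1); lia).
      assert (Hi : 0 < / INR (S j) <= 1).
      { split. apply Rinv_0_lt_compat; lra. rewrite <- Rinv_1. apply Rinv_le_contravar; lra. }
      pose proof (pow_le mu (S j) ltac:(lra)). unfold Rdiv. split; [apply Rmult_le_pos; lra|].
      rewrite <- (Rmult_1_r (mu ^ S j)) at 2. apply Rmult_le_compat_l; lra.
  - apply ex_series_geom. rewrite Rabs_pos_eq; lra.
Qed.

Lemma ex_Gq m c mu : 0 <= mu < 1 -> ex_series (Gq m c mu).
Proof.
  intros Hmu. apply (proj2 (ex_series_incr_1 _)).
  apply ex_series_extR with (fun k => (- (INR m * c)) * mu ^ k).
  - intros; reflexivity.
  - apply ex_series_scalR, ex_series_geom. rewrite Rabs_pos_eq; lra.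
Qed.

Lemma v_in_Sm m q : (1 <= m)%nat -> 0 < q <= /8 -> Sm m (vq q).
Proof.
  intros hm hq.
  pose proof (c_bounds m q hm hq) as Hc.
  assert (Hmu : 0 <= 1 - q ^ m < 1) by lra.
  assert (Hv : l2 (vq q)) by (apply l2_pow; lra).
  assert (HNv : l2 (app Nop (vq q))) by (apply l2_Npow; lra).
  set (a := Series (Fq (1 - q ^ m))). set (b := Series (Gq m (q ^ m) (1 - q ^ m))).
  assert (Hlog1 : l2conv (logpsum (opow Lop m) (vq q))
                   (fun n => Cplus (Cmult (RtoC a) (vq q n)) (Cmult (RtoC 0) (vq q n)))).
  { apply (l2conv_two (vq q) (vq q) (sum_n (Fq (1 - q ^ m))) (fun _ => 0) a 0); auto.
    - apply lim_sum, ex_Fq; exact Hmu.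
    - apply is_lim_seq_const.
    - intros K n. apply logpsum_v. }
  assert (Hlog2 : l2conv (logpsum (opow Lop m) (app Nop (vq q)))
                   (fun n => Cplus (Cmult (RtoC a) (app Nop (vq q) n)) (Cmult (RtoC b) (vq q n)))).
  { apply (l2conv_two (app Nop (vq q)) (vq q) (sum_n (Fq (1 - q ^ m)))
             (sum_n (Gq m (q ^ m) (1 - q ^ m))) a b); auto.
    - apply lim_sum, ex_Fq; exact Hmu.
    - apply lim_sum, ex_Gq; exact Hmu.
    - intros K n. apply logpsum_Nv. }
  split; [|split].
  - split; [exact Hv|].
    apply (l2conv_two (vq q) (vq q) (fun k => (1 - q ^ m) ^ k) (fun _ => 0) 0 0); auto.
    + apply is_lim_seq_geom. rewrite Rabs_pos_eq; lra.
    + apply is_lim_seq_const.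
    + intros K n. change (osub idop (opow Lop m)) with (Tm m). rewrite T_v. ring.
    + intros n. ring.
  - split.
    + split; [intros k; apply (pres_A m k); exact Hv|]. eexists; exact Hlog1.
    + split.
      * apply l2_ext with (fun n => Cmult (RtoC (- a)) (vq q n)).
        -- intros n. rewrite (logop_app _ _ _ Hlog1). rewrite RtoC_opp. ring.
        -- apply l2_scal; exact Hv.
      * apply l2_ext with (fun n => Cmult (RtoC (- a)) (app Nop (vq q) n)).
        -- intros n. rewrite (logop_app _ _ _ Hlog1). rewrite RtoC_opp. simpl. ring.
        -- apply l2_scal; exact HNv.
  - split.
    + split; assumption.
    + split; [intros k; apply (pres_A m k); exact HNv|]. eexists; exact Hlog2.
Qed.

Lemma csum_ext d f g : (forall j, (j < d)%nat -> f j = g j) -> csum d f = csum d g.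
Proof.
  induction d; intros H; simpl; [reflexivity|].
  rewrite IHd by (intros; apply H; lia). rewrite H by lia. reflexivity.
Qed.

Lemma csum_minus d f g : csum d (fun j => Cminus (f j) (g j)) = Cminus (csum d f) (csum d g).
Proof. induction d; simpl. ring. rewrite IHd. ring. Qed.

Lemma csum_scal d k f : csum d (fun j => Cmult k (f j)) = Cmult k (csum d f).
Proof. induction d; simpl. ring. rewrite IHd. ring. Qed.

Lemma csum_zero d : csum d (fun _ => RtoC 0) = RtoC 0.
Proof. induction d; simpl. reflexivity. rewrite IHd. ring. Qed.

Lemma indep d : forall (c : nat -> C) (lam : nat -> R),
  (forall i j, (i < d)%nat -> (j < d)%nat -> lam i = lam j -> i = j) ->
  (forall n, csum d (fun j => Cmult (c j) (RtoC (lam j ^ n))) = RtoC 0) ->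
  forall j, (j < d)%nat -> c j = RtoC 0.
Proof.
  induction d; intros c lam Hinj H j Hj; [lia|].
  assert (Hc' : forall j, (j < d)%nat -> Cmult (c j) (RtoC (lam j - lam d)) = RtoC 0).
  { apply (IHd (fun j => Cmult (c j) (RtoC (lam j - lam d))) lam).
    - intros; apply Hinj; auto; lia.
    - intros n. pose proof (H (S n)) as E1. pose proof (H n) as E0.
      change (csum (S d) ?F) with (Cplus (csum d F) (F d)) in E1, E0.
      rewrite (csum_ext d _ (fun j => Cminus (Cmult (c j) (RtoC (lam j ^ S n)))
                  (Cmult (RtoC (lam d)) (Cmult (c j) (RtoC (lam j ^ n)))))).
      + rewrite csum_minus, csum_scal.
        transitivity (Cminus (Cplus (csum d (fun j => Cmult (c j) (RtoC (lam j ^ S n)))) (Cmult (c d) (RtoC (lam d ^ S n))))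
           (Cmult (RtoC (lam d)) (Cplus (csum d (fun j => Cmult (c j) (RtoC (lam j ^ n)))) (Cmult (c d) (RtoC (lam d ^ n)))))).
        * simpl pow. rewrite !RtoC_mult. ring.
        * rewrite E1, E0. ring.
      + intros i Hi. simpl pow. rewrite !RtoC_mult, RtoC_minus. ring. }
  assert (Hlow : forall i, (i < d)%nat -> c i = RtoC 0).
  { intros i Hi. specialize (Hc' i Hi).
    assert (Hne : lam i - lam d <> 0).
    { intros E. assert (i = d) by (apply Hinj; [lia|lia|lra]). lia. }
    pose proof (RtoC_nz _ Hne) as Hne'.
    transitivity (Cmult (Cmult (c i) (RtoC (lam i - lam d))) (Cinv (RtoC (lam i - lam d)))).
    - field. exact Hne'.
    - rewrite Hc'. ring. }
  destruct (Nat.eq_dec j d) as [->|Hjd]; [|apply Hlow; lia].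
  pose proof (H 0%nat) as E. change (csum (S d) ?F) with (Cplus (csum d F) (F d)) in E.
  rewrite (csum_ext d _ (fun _ => RtoC 0)) in E.
  - rewrite csum_zero in E. simpl pow in E. rewrite <- E. ring.
  - intros i Hi. rewrite Hlow by exact Hi. ring.
Qed.

Theorem mainTheorem16 (m : nat) (hm : (1 <= m)%nat) :
  (forall phi : seqC, Sm m phi ->
     dom (comm Nop (oscal (Cdiv Ci (RtoC (INR m))) (logop (opow Lop m)))) phi /\
     forall n : nat,
       app (comm Nop (oscal (Cdiv Ci (RtoC (INR m))) (logop (opow Lop m)))) phi n
       = Cmult (Copp Ci) (phi n))
  /\ infinite_dimensional (Sm m).
Proof.
  split; [apply part1; exact hm|].
  intros d. exists (fun j => vq (/ (INR j + 8))). split.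
  - intros j _. apply v_in_Sm; [exact hm|].
    pose proof (pos_INR j). split.
    + apply Rinv_0_lt_compat; lra.
    + apply Rinv_le_contravar; lra.
  - intros c Hc. apply (indep d c (fun j => / (INR j + 8))).
    + intros i j _ _ E. apply INR_eq.
      pose proof (pos_INR i). pose proof (pos_INR j).
      apply (f_equal Rinv) in E. rewrite !Rinv_inv in E. lra.
    + exact Hc.
Qed.
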